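(* Let $W_{24,23}$ be the $24\times 24$ matrix \[ W_{24,23}=\begin{pmatrix} 0 & 1 & \cdots & 1\\ -1 & & & \\ \vdots & & A & \\ -1 & & & \end{pmatrix}, \] where $A$ is the $23\times 23$ circulant matrix with first row $(0,1,1,1,1,-1,1,-1,1,1,-1,-1,1,1,-1,-1,1,-1,1,-1,-1,-1,-1)$. Let $C_3(W_{24,23})$ be the ternary code of length $48$ with generator matrix $(I\ \ W_{24,23})$, entries read modulo $3$. Then the lattice $A_3(C_3(W_{24,23}))$ contains a $k$-frame for every positive integer $k\ge 3$ that is not of the form $2^{m_1}5^{m_2}7^{m_3}23^{m_4}$ with $m_1,m_2,m_3,m_4$ non-negative integers.
   Context: An $N\times N$ circulant matrix with first row $(r_0,\dots,r_{N-1})$ is the matrix whose $(i,j)$ entry ($0\le i,j\le N-1$) is $r_{(j-i)\bmod N}$. Construction A: with $\rho:\mathbb{Z}_k\to\mathbb{Z}$ sending $0,1,\dots,k-1$ to $0,1,\dots,k-1$, for a $\mathbb{Z}_k$-code $C$ of length $N$ set $A_k(C)=\frac{1}{\sqrt{k}}\{\rho(C)+k\mathbb{Z}^N\}$. A $t$-frame of a lattice in dimension $N$ is a set of $N$ lattice vectors $f_1,\dots,f_N$ with $(f_i,f_j)=t\,\delta_{i,j}$. *)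

(* Defs.v *)
From HB Require Import structures.
From mathcomp Require Import all_boot all_order all_algebra.
Set Implicit Arguments. Unset Strict Implicit. Unset Printing Implicit Defensive.
Import Order.TTheory GRing.Theory Num.Theory.
Local Open Scope ring_scope.

Definition A_row : seq int :=
  [:: 0; 1; 1; 1; 1; -1; 1; -1; 1; 1; -1; -1; 1; 1; -1; -1; 1; -1; 1; -1; -1; -1; -1].

Definition circulant (N : nat) (r : seq int) : 'M[int]_N :=
  \matrix_(i < N, j < N) nth 0 r ((j + N - i) %% N)%N.

Definition A23 : 'M[int]_23 := circulant 23 A_row.

Definition W24 : 'M[int]_24 :=
  \matrix_(i < 24, j < 24)
    if (i == 0%N :> nat) then (if (j == 0%N :> nat) then 0 else 1)
    else if (j == 0%N :> nat) then -1
    else A23 (inord i.-1) (inord j.-1).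

Definition GenC3 : 'M['Z_3]_(24, 24 + 24) :=
  row_mx 1%:M (map_mx (fun z : int => z%:~R) W24).

Definition C3W : {set 'rV['Z_3]_(24 + 24)} :=
  [set c | [exists m : 'rV['Z_3]_24, c == m *m GenC3]].

Definition rho3 (a : 'Z_3) : int := (nat_of_ord a)%:Z.

Definition A3 (R : rcfType) (N : nat) (C : {set 'rV['Z_3]_N}) : 'rV[R]_N -> Prop :=
  fun x => exists c, c \in C /\ exists w : 'rV[int]_N,
    x = (Num.sqrt 3)^-1 *: map_mx (fun z : int => z%:~R)
                               (map_mx rho3 c + 3 *: w).

Definition dotR (R : rcfType) (N : nat) (x y : 'rV[R]_N) : R :=
  \sum_(l < N) x 0 l * y 0 l.

Definition has_frame (R : rcfType) (N : nat) (L : 'rV[R]_N -> Prop) (t : nat) : Prop :=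
  exists f : 'I_N -> 'rV[R]_N,
    (forall i, L (f i)) /\
    (forall i j, dotR (f i) (f j) = if i == j then t%:R else 0).

(* Main.v *)
From Stdlib Require Import ZArith Lia Znumtheory List Classical FinFun.
Open Scope Z_scope.

Definition fsq (n : Z) := exists a b c d : Z, n = a*a+b*b+c*c+d*d.

Lemma fsq_mul m n : fsq m -> fsq n -> fsq (m*n).
Proof.
intros [x1 [x2 [x3 [x4 ->]]]] [y1 [y2 [y3 [y4 ->]]]].
exists (x1*y1+x2*y2+x3*y3+x4*y4), (x1*y2-x2*y1+x3*y4-x4*y3),
  (x1*y3-x3*y1+x4*y2-x2*y4), (x1*y4-x4*y1+x2*y3-x3*y2). ring.
Qed.

Lemma prime_not_div p m : prime p -> 1 < m < p -> ~ (exists t, p = m * t).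
Proof.
intros Hp Hm [t Ht].
destruct Hp as [_ Hp]. assert (H := Hp m ltac:(lia)).
destruct H as [_ _ H]. assert (Hd : (m | 1)).
{ apply H. apply Z.divide_refl. exists t. lia. }
apply Z.divide_pos_le in Hd; lia.
Qed.

Lemma red x m : 0 < m -> exists q, -m <= 2*(x - m*q) < m.
Proof.
intros Hm. exists ((2*x+m)/(2*m)).
pose proof (Z.div_mod (2*x+m) (2*m) ltac:(lia)).
pose proof (Z.mod_pos_bound (2*x+m) (2*m) ltac:(lia)). 
set (u := (2*x+m)/(2*m)) in *. set (v := (2*x+m) mod (2*m)) in *. lia.
Qed.

Lemma sq_bound y m : -m <= 2*y < m -> 4*(y*y) <= m*m.
Proof. intros H. assert (0 <= (m-2*y)*(m+2*y)) by (apply Z.mul_nonneg_nonneg; lia). nia. Qed.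

Lemma half_sq y m : 4*(y*y) = m*m -> exists e, 2*y = e*m /\ e*e = 1.
Proof.
intros H. destruct (Z.eq_dec (2*y) m); [exists 1; lia|]. exists (-1).
assert ((2*y - m)*(2*y+m) = 0) by (ring_simplify; lia).
apply Z.mul_eq_0 in H0. lia.
Qed.

Lemma sq_nonneg y : 0 <= y*y.
Proof. nia. Qed.

Lemma sq_zero y : y*y = 0 -> y = 0.
Proof. intros H. apply Z.mul_eq_0 in H. lia. Qed.
Lemma descent p : prime p -> forall n : nat, forall m, 0 < m -> (Z.to_nat m <= n)%nat -> m < p ->
  fsq (m*p) -> fsq p.
Proof.
intros Hp. pose proof (prime_ge_2 _ Hp) as Hp2.
induction n as [|n IH]; intros m Hm Hmn Hmp Hf.
- lia.
- destruct (Z.eq_dec m 1) as [->|Hm1]. { now rewrite Z.mul_1_l in Hf. }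
  destruct Hf as [x1 [x2 [x3 [x4 Hx]]]].
  destruct (red x1 m Hm) as [q1 Hq1]. destruct (red x2 m Hm) as [q2 Hq2].
  destruct (red x3 m Hm) as [q3 Hq3]. destruct (red x4 m Hm) as [q4 Hq4].
  remember (x1 - m*q1) as y1 eqn:Ey1. remember (x2 - m*q2) as y2 eqn:Ey2.
  remember (x3 - m*q3) as y3 eqn:Ey3. remember (x4 - m*q4) as y4 eqn:Ey4.
  remember (p - 2*(x1*q1+x2*q2+x3*q3+x4*q4) + m*(q1*q1+q2*q2+q3*q3+q4*q4)) as r eqn:Er.
  assert (HY : y1*y1+y2*y2+y3*y3+y4*y4 = m*r).
  { transitivity ((x1*x1+x2*x2+x3*x3+x4*x4) - 2*m*(x1*q1+x2*q2+x3*q3+x4*q4)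
       + m*m*(q1*q1+q2*q2+q3*q3+q4*q4)).
    { subst; ring. } rewrite <- Hx. subst r. ring. }
  pose proof (sq_bound _ _ Hq1) as Hb1. pose proof (sq_bound _ _ Hq2) as Hb2.
  pose proof (sq_bound _ _ Hq3) as Hb3. pose proof (sq_bound _ _ Hq4) as Hb4.
  pose proof (sq_nonneg y1). pose proof (sq_nonneg y2).
  pose proof (sq_nonneg y3). pose proof (sq_nonneg y4).
  assert (Hr0 : 0 <= r) by (apply (Z.mul_nonneg_cancel_l m r Hm); lia).
  assert (Hrm : r <= m) by (apply (Z.mul_le_mono_pos_l _ _ m Hm); lia).
  destruct (Z.eq_dec r 0) as [Hr|Hr].
  { exfalso. apply (prime_not_div p m Hp ltac:(lia)).
    exists (q1*q1+q2*q2+q3*q3+q4*q4).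
    assert (y1 = 0) by (apply sq_zero; lia). assert (y2 = 0) by (apply sq_zero; lia).
    assert (y3 = 0) by (apply sq_zero; lia). assert (y4 = 0) by (apply sq_zero; lia).
    assert (x1 = m*q1) by lia. assert (x2 = m*q2) by lia.
    assert (x3 = m*q3) by lia. assert (x4 = m*q4) by lia.
    apply (Z.mul_cancel_l _ _ m); [lia|]. rewrite Hx. subst x1 x2 x3 x4. ring. }
  destruct (Z.eq_dec r m) as [Hr'|Hr'].
  { exfalso.
    destruct (half_sq y1 m ltac:(subst r; lia)) as [e1 [F1 G1]].
    destruct (half_sq y2 m ltac:(subst r; lia)) as [e2 [F2 G2]].
    destruct (half_sq y3 m ltac:(subst r; lia)) as [e3 [F3 G3]].
    destruct (half_sq y4 m ltac:(subst r; lia)) as [e4 [F4 G4]].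
    apply (prime_not_div p m Hp ltac:(lia)).
    exists (1 + (e1*q1+e2*q2+e3*q3+e4*q4) + (q1*q1+q2*q2+q3*q3+q4*q4)).
    assert (Hx4 : 4*(m*p) = (2*y1+2*m*q1)*(2*y1+2*m*q1) + (2*y2+2*m*q2)*(2*y2+2*m*q2)
       + (2*y3+2*m*q3)*(2*y3+2*m*q3) + (2*y4+2*m*q4)*(2*y4+2*m*q4)).
    { rewrite Hx. subst y1 y2 y3 y4. ring. }
    rewrite F1,F2,F3,F4 in Hx4.
    assert (Hx5 : 4*(m*p) = m*(4*m*(1 + (e1*q1+e2*q2+e3*q3+e4*q4) + (q1*q1+q2*q2+q3*q3+q4*q4)))
       + m*m*((e1*e1-1)+(e2*e2-1)+(e3*e3-1)+(e4*e4-1))).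
    { rewrite Hx4. ring. }
    rewrite G1,G2,G3,G4 in Hx5.
    apply (Z.mul_cancel_l _ _ (4*m)); [lia|]. rewrite <- Z.mul_assoc, Hx5. ring. }
  apply (IH r); [lia|lia|lia|].
  exists (p - (x1*q1+x2*q2+x3*q3+x4*q4)), (-x1*q2 + x2*q1 - x3*q4 + x4*q3),
     (-x1*q3 + x3*q1 - x4*q2 + x2*q4), (-x1*q4 + x4*q1 - x2*q3 + x3*q2).
  set (w1 := p - (x1*q1+x2*q2+x3*q3+x4*q4)).
  set (w2 := -x1*q2 + x2*q1 - x3*q4 + x4*q3).
  set (w3 := -x1*q3 + x3*q1 - x4*q2 + x2*q4).
  set (w4 := -x1*q4 + x4*q1 - x2*q3 + x3*q2).
  assert (Eu : (x1*x1+x2*x2+x3*x3+x4*x4)*(y1*y1+y2*y2+y3*y3+y4*y4) =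
     (x1*y1+x2*y2+x3*y3+x4*y4)*(x1*y1+x2*y2+x3*y3+x4*y4) + (x1*y2-x2*y1+x3*y4-x4*y3)*(x1*y2-x2*y1+x3*y4-x4*y3) +
     (x1*y3-x3*y1+x4*y2-x2*y4)*(x1*y3-x3*y1+x4*y2-x2*y4) + (x1*y4-x4*y1+x2*y3-x3*y2)*(x1*y4-x4*y1+x2*y3-x3*y2)) by ring.
  assert (Z1 : x1*y1+x2*y2+x3*y3+x4*y4 = m*w1).
  { transitivity ((x1*x1+x2*x2+x3*x3+x4*x4) - m*(x1*q1+x2*q2+x3*q3+x4*q4)).
    { subst y1 y2 y3 y4; ring. } rewrite <- Hx. unfold w1. ring. }
  assert (Z2 : x1*y2-x2*y1+x3*y4-x4*y3 = m*w2) by (subst y1 y2 y3 y4; unfold w2; ring).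
  assert (Z3 : x1*y3-x3*y1+x4*y2-x2*y4 = m*w3) by (subst y1 y2 y3 y4; unfold w3; ring).
  assert (Z4 : x1*y4-x4*y1+x2*y3-x3*y2 = m*w4) by (subst y1 y2 y3 y4; unfold w4; ring).
  rewrite Z1,Z2,Z3,Z4, <- Hx, HY in Eu.
  apply (Z.mul_cancel_l _ _ (m*m)); [lia|].
  transitivity (m*p*(m*r)); [ring|]. rewrite Eu. ring.
Qed.

Lemma div_small p d : (p | d) -> - p < d < p -> d = 0.
Proof. intros [k ->] H. assert (k = 0) by nia. subst. ring. Qed.

Lemma sq_inj p x x' : prime p -> 0 <= x -> 0 <= x' -> 2*x < p -> 2*x' < p ->
  (x*x - x'*x') mod p = 0 -> x = x'.
Proof.
intros Hp Hx Hx' H1 H2 Hm. pose proof (prime_ge_2 _ Hp).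
apply Z.mod_divide in Hm; [|lia].
replace (x*x - x'*x') with ((x-x')*(x+x')) in Hm by ring.
destruct (prime_mult _ Hp _ _ Hm) as [D|D]; apply div_small in D; lia.
Qed.

Lemma mod_eq_sub a b p : 0 < p -> a mod p = b mod p -> (a - b) mod p = 0.
Proof. intros Hp H. rewrite Zminus_mod, H, Z.sub_diag. reflexivity. Qed.

Lemma two_sq p : prime p -> p <> 2 -> exists x y, 0 <= x /\ 2*x < p /\ 0 <= y /\ 2*y < p /\
  (x*x+y*y+1) mod p = 0.
Proof.
intros Hp Hp2. pose proof (prime_ge_2 _ Hp).
assert (Hodd : p mod 2 = 1).
{ pose proof (Z.mod_pos_bound p 2 ltac:(lia)). destruct (Z.eq_dec (p mod 2) 0) as [E|E]; [|lia].
  exfalso. apply (prime_not_div p 2 Hp ltac:(lia)). exists (p/2).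
  pose proof (Z.div_mod p 2 ltac:(lia)). lia. }
pose proof (Z.div_mod p 2 ltac:(lia)) as Hd.
set (h := p/2) in *.
apply NNPP. intros Hno.
set (dom := map Z.of_nat (seq 0 (Z.to_nat (h+1)))).
assert (Hdom : forall x, In x dom -> 0 <= x /\ 2*x < p).
{ intros x Hx. unfold dom in Hx. apply in_map_iff in Hx. destruct Hx as [n [<- Hn]].
  apply in_seq in Hn. lia. }
set (l1 := map (fun x => (x*x) mod p) dom).
set (l2 := map (fun y => (-1 - y*y) mod p) dom).
assert (N1 : NoDup l1).
{ apply NoDup_map_NoDup_ForallPairs.
  - intros x x' Hx Hx' E. apply Hdom in Hx. apply Hdom in Hx'.
    apply (sq_inj p _ _ Hp); try lia. apply mod_eq_sub; [lia|exact E].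
  - unfold dom. apply Injective_map_NoDup; [intros a b; lia|apply seq_NoDup]. }
assert (N2 : NoDup l2).
{ apply NoDup_map_NoDup_ForallPairs.
  - intros x x' Hx Hx' E. apply Hdom in Hx. apply Hdom in Hx'.
    apply mod_eq_sub in E; [|lia].
    replace (-1 - x*x - (-1 - x'*x')) with (x'*x' - x*x) in E by ring.
    assert (x' = x). { apply (sq_inj p _ _ Hp); lia. } lia.
  - unfold dom. apply Injective_map_NoDup; [intros a b; lia|apply seq_NoDup]. }
assert (N : NoDup (l1 ++ l2)).
{ apply NoDup_app; auto. intros a H1 H2. apply Hno.
  unfold l1 in H1. unfold l2 in H2. apply in_map_iff in H1. apply in_map_iff in H2.
  destruct H1 as [x [Ex Hx]]. destruct H2 as [y [Ey Hy]].
  apply Hdom in Hx. apply Hdom in Hy. exists x, y. repeat split; try lia.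
  rewrite <- Ey in Ex. apply mod_eq_sub in Ex; [|lia].
  replace (x*x - (-1-y*y)) with (x*x+y*y+1) in Ex by ring. exact Ex. }
assert (I : incl (l1 ++ l2) (map Z.of_nat (seq 0 (Z.to_nat p)))).
{ intros a Ha. assert (0 <= a < p).
  { apply in_app_or in Ha. destruct Ha as [Ha|Ha]; apply in_map_iff in Ha;
    destruct Ha as [x [<- _]]; apply Z.mod_pos_bound; lia. }
  apply in_map_iff. exists (Z.to_nat a). split; [lia|]. apply in_seq. lia. }
apply NoDup_incl_length in I; auto.
rewrite length_app in I. unfold l1, l2, dom in I. rewrite !length_map, !length_seq in I. lia.
Qed.

Lemma fsq_prime p : prime p -> fsq p.
Proof.
intros Hp. pose proof (prime_ge_2 _ Hp).
destruct (Z.eq_dec p 2) as [->|Hp2]. { exists 1, 1, 0, 0. reflexivity. }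
destruct (two_sq p Hp Hp2) as [x [y [H1 [H2 [H3 [H4 H5]]]]]].
pose proof (Z.div_mod (x*x+y*y+1) p ltac:(lia)) as Hd. rewrite H5, Z.add_0_r in Hd.
set (m := (x*x+y*y+1)/p) in *.
assert (Hm0 : 0 < m) by nia.
assert (Hm1 : m < p) by nia.
apply (descent p Hp (Z.to_nat m) m Hm0 (le_n _) Hm1).
exists x, y, 1, 0. rewrite Z.mul_comm, <- Hd. ring.
Qed.

Lemma fsq_all_aux : forall N : nat, forall n, 0 <= n -> (Z.to_nat n <= N)%nat -> fsq n.
Proof.
induction N as [|N IH]; intros n Hn HN.
- assert (n = 0) by lia. subst. exists 0,0,0,0. reflexivity.
- destruct (Z.eq_dec n 0) as [->|H0]. { exists 0,0,0,0. reflexivity. }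
  destruct (Z.eq_dec n 1) as [->|H1]. { exists 1,0,0,0. reflexivity. }
  destruct (prime_dec n) as [P|P]. { now apply fsq_prime. }
  destruct (not_prime_divide n ltac:(lia) P) as [d [Hd [e He]]].
  assert (1 < e < n) by nia.
  rewrite He. apply fsq_mul; apply IH; lia.
Qed.

Lemma fsq_nat (n : nat) : exists a b c d : nat, n = (a*a+b*b+c*c+d*d)%nat.
Proof.
destruct (fsq_all_aux n (Z.of_nat n) ltac:(lia) ltac:(lia)) as [a [b [c [d H]]]].
exists (Z.abs_nat a), (Z.abs_nat b), (Z.abs_nat c), (Z.abs_nat d). nia.
Qed.

Close Scope Z_scope.

Require Import Defs.
From HB Require Import structures.
From mathcomp Require Import all_boot all_order all_algebra zify.
Import Order.TTheory GRing.Theory Num.Theory.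
Local Open Scope ring_scope.


Definition wf (i j : nat) : int :=
  if i == 0%N then (if j == 0%N then 0 else 1)
  else if j == 0%N then -1 else nth 0 A_row ((j.-1 + 23 - i.-1) %% 23)%N.

Lemma W24E (i j : 'I_24) : W24 i j = wf i j.
Proof.
rewrite /W24 /wf !mxE.
case: (i == 0%N :> nat) => //; case: (j == 0%N :> nat) => //.
by rewrite !inordK //; [have := ltn_ord i | have := ltn_ord j]; lia.
Qed.

Definition spf (pm : seq nat) (sg : seq int) (i j : nat) : int :=
  if nth 0%N pm i == j then nth 0 sg i else 0.

Definition pJ : seq nat := [:: 1; 0; 23; 12; 16; 18; 10; 20; 14; 21; 6; 17; 3; 22; 8; 19; 4; 11; 5; 15; 7; 9; 13; 2]%N.
Definition sJ : seq int := [:: 1; -1; -1; -1; -1; -1; 1; -1; 1; -1; -1; 1; 1; -1; -1; 1; 1; -1; 1; -1; 1; 1; 1; 1].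
Definition pK : seq nat := [:: 7; 20; 18; 15; 10; 23; 16; 0; 21; 14; 4; 22; 19; 17; 9; 3; 6; 13; 2; 12; 1; 8; 11; 5]%N.
Definition sK : seq int := [:: 1; 1; -1; 1; 1; 1; 1; -1; -1; -1; -1; -1; 1; -1; 1; -1; -1; 1; 1; -1; -1; 1; 1; -1].
Definition pL : seq nat := [:: 20; 7; 5; 19; 6; 2; 4; 1; 9; 8; 16; 13; 15; 11; 21; 12; 10; 22; 23; 3; 0; 14; 17; 18]%N.
Definition sL : seq int := [:: 1; -1; 1; -1; 1; -1; -1; 1; 1; -1; -1; 1; 1; -1; 1; -1; 1; 1; 1; 1; -1; -1; -1; -1].

Definition offd (f : nat -> nat -> int) (g : nat -> nat -> int) (i l : nat) : int :=
  if (i < 24)%N then (if (l < 24)%N then 0 else f i (l - 24)%N)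
  else (if (l < 24)%N then g (i - 24)%N l else 0).

Definition ef (p i l : nat) : int :=
  if p == 0%N then (if i == l then 1 else 0)
  else if p == 1%N then (if (i < 24)%N then (if (l < 24)%N then wf i l else 0)
         else (if (l < 24)%N then 0 else wf (l - 24)%N (i - 24)%N))
  else if p == 2%N then offd (fun a b => if a == b then 1 else 0) (fun a b => if a == b then -1 else 0) i l
  else if p == 3%N then offd (spf pJ sJ) (spf pJ sJ) i l
  else if p == 4%N then offd (spf pK sK) (spf pK sK) i l
  else offd (spf pL sL) (spf pL sL) i l.

Definition wt (p : nat) : int := if p == 1%N then 23 else 1.

Definition gr (p q i j : nat) : int := foldr (fun l acc => ef p i l * ef q j l + acc) 0 (iota 0 48).

Definition chk : bool :=
  all (fun p => all (fun q => all (fun i => all (fun j =>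
     gr p q i j + gr q p i j == (if (p == q) && (i == j) then 2 * wt p else 0))
     (iota 0 48)) (iota 0 48)) (iota 0 6)) (iota 0 6).


Definition uf (i l : nat) : int := ef 1 i l + ef 2 i l.

Definition chk2 : bool :=
  all (fun i => all (fun l =>
     ((foldr (fun s acc => uf i s * wf s l + acc) 0 (iota 0 24) - uf i (24 + l)%N) %% 3)%Z == 0)
     (iota 0 24)) (iota 0 48).

Lemma chk2_ok : chk2 = true. Proof. vm_compute. reflexivity. Qed.
Lemma chk_ok : chk = true. Proof. vm_compute. reflexivity. Qed.


Lemma sum_iota (F : nat -> int) n : \sum_(l < n) F l = foldr (fun l acc => F l + acc) 0 (iota 0 n).
Proof. rewrite -(big_mkord xpredT F) /index_iota subn0. elim: (iota 0 n) => [|a s IH]; by rewrite ?big_nil ?big_cons ?IH. Qed.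

Lemma chk_spec p q i j : (p < 6)%N -> (q < 6)%N -> (i < 48)%N -> (j < 48)%N ->
  gr p q i j + gr q p i j = (if (p == q) && (i == j) then 2 * wt p else 0).
Proof.
move=> Hp Hq Hi Hj. apply/eqP.
move: chk_ok; rewrite /chk => /allP/(_ p); rewrite mem_iota add0n Hp => /(_ isT).
move=> /allP/(_ q); rewrite mem_iota add0n Hq => /(_ isT).
move=> /allP/(_ i); rewrite mem_iota add0n Hi => /(_ isT).
by move=> /allP/(_ j); rewrite mem_iota add0n Hj => /(_ isT).
Qed.

Definition vf (t : nat -> int) (i l : nat) : int := \sum_(p < 6) t p * ef p i l.

Lemma gram t i j : (i < 48)%N -> (j < 48)%N ->
  \sum_(l < 48) vf t i l * vf t j l = if i == j then \sum_(p < 6) wt p * t p ^+ 2 else 0.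
Proof.
move=> Hi Hj.
have E : \sum_(l < 48) vf t i l * vf t j l =
   \sum_(p < 6) \sum_(q < 6) (t p * t q) * gr p q i j.
{ rewrite /vf.
  under eq_bigr => l _ do rewrite big_distrl /=.
  under eq_bigr => l _ do under eq_bigr => p _ do rewrite big_distrr /=.
  rewrite exchange_big /=. apply: eq_bigr => p _.
  rewrite exchange_big /=. apply: eq_bigr => q _.
  rewrite /gr -sum_iota big_distrr /=. apply: eq_bigr => l _.
  by rewrite mulrACA. }
rewrite E. apply: (@mulfI _ 2) => //.
set S := \sum_(p < 6) \sum_(q < 6) (t p * t q) * gr p q i j.
have -> : 2 * S = \sum_(p < 6) \sum_(q < 6) (t p * t q) * (gr p q i j + gr q p i j).
{ have -> : \sum_(p < 6) \sum_(q < 6) (t p * t q) * (gr p q i j + gr q p i j) =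
     S + \sum_(p < 6) \sum_(q < 6) (t p * t q) * gr q p i j.
  { rewrite -big_split; apply: eq_bigr => p _; rewrite -big_split; apply: eq_bigr => q _.
    by rewrite mulrDr. }
  have -> : \sum_(p < 6) \sum_(q < 6) (t p * t q) * gr q p i j = S.
  { rewrite exchange_big /=. apply: eq_bigr => p _; apply: eq_bigr => q _. by rewrite [t _ * t _]mulrC. }
  lia. }
transitivity (\sum_(p < 6) \sum_(q < 6) (t p * t q) *
   (if ((p : nat) == q) && (i == j) then 2 * wt p else 0)).
{ apply: eq_bigr => p _; apply: eq_bigr => q _. by rewrite chk_spec. }
case: (i =P j) => [_|ne]; last first.
{ rewrite mulr0. apply: big1 => p _. apply: big1 => q _. by rewrite andbF mulr0. }
rewrite mulr_sumr. apply: eq_bigr => p _.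
rewrite (bigD1 p) //= big1 ?addr0; last first.
{ move=> q Hq. have /negbTE -> : (p : nat) != q by rewrite val_eqE eq_sym. by rewrite mulr0. }
rewrite eqxx /=. rewrite expr2. lia.
Qed.


Lemma three_Z3 : ((3:int)%:~R : 'Z_3) = 0.
Proof. apply: val_inj. reflexivity. Qed.

Lemma dvd3_Z3 (z : int) : (3 %| z)%Z -> (z%:~R : 'Z_3) = 0.
Proof. move=> /dvdzP [q ->]. by rewrite intrM three_Z3 mulr0. Qed.

Lemma Z3_dvd3 (z : int) : (z%:~R : 'Z_3) = 0 -> (3 %| z)%Z.
Proof.
move=> H. apply/dvdz_mod0P.
have E : (z%:~R : 'Z_3) = ((z %% 3)%Z)%:~R.
{ rewrite {1}(divz_eq z 3) intrD intrM three_Z3 mulr0 add0r //. }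
have h0 : (0 <= (z %% 3)%Z) by apply: modz_ge0.
have h3 : ((z %% 3)%Z < 3) by apply: ltz_pmod.
move: E h0 h3; case: (z %% 3)%Z => [n|n] // E _.
case: n E => [|[|[|n]]] // E _; by rewrite H in E.
Qed.

Lemma rho3_dvd (z : int) : (3 %| (z - rho3 (z%:~R : 'Z_3)))%Z.
Proof.
apply: Z3_dvd3. rewrite intrB /rho3 -pmulrn natr_Zp. by rewrite subrr.
Qed.

Arguments dvd3_Z3 {z}.

Lemma chk2_spec i l : (i < 48)%N -> (l < 24)%N ->
  (3 %| (\sum_(s < 24) uf i s * wf s l - uf i (24 + l)%N))%Z.
Proof.
move=> Hi Hl. apply/dvdz_mod0P. apply/eqP.
rewrite (sum_iota (fun s => uf i s * wf s l)).
move: chk2_ok; rewrite /chk2 => /allP/(_ i); rewrite mem_iota add0n Hi => /(_ isT).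
by move=> /allP/(_ l); rewrite mem_iota add0n Hl => /(_ isT).
Qed.

Lemma code_vec (t : nat -> int) (i : nat) : (i < 48)%N -> (3 %| t 0%N)%Z -> (3 %| t 2%N - t 1%N)%Z ->
  (3 %| t 3%N)%Z -> (3 %| t 4%N)%Z -> (3 %| t 5%N)%Z ->
  (\row_(l < 24 + 24) ((vf t i l)%:~R : 'Z_3)) \in C3W.
Proof.
move=> Hi H0 H21 H3 H4 H5.
have Hc : forall l, ((vf t i l)%:~R : 'Z_3) = (t 1%N)%:~R * (uf i l)%:~R.
{ move=> l. rewrite /vf !big_ord_recl big_ord0 /= !(intrD, intrM).
  rewrite (dvd3_Z3 H0) (dvd3_Z3 H3) (dvd3_Z3 H4) (dvd3_Z3 H5) !mul0r.
  have -> : ((t 2%N)%:~R : 'Z_3) = (t 1%N)%:~R.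
  { by apply/eqP; rewrite -subr_eq0 -intrB (dvd3_Z3 H21). }
  rewrite /bump /= mulrDr. rewrite !add0r !addr0. done. }
rewrite inE; apply/existsP; exists ((t 1%N)%:~R *: \row_(s < 24) ((uf i s)%:~R : 'Z_3)).
apply/eqP. rewrite /GenC3 mul_mx_row mulmx1. apply/rowP => l. rewrite mxE Hc.
rewrite -(splitK l). case: (split l) => s /=.
- rewrite row_mxEl !mxE. done.
- rewrite row_mxEr !mxE.
  have := dvd3_Z3 (chk2_spec _ _ Hi (ltn_ord s)).
  rewrite intrB => /eqP; rewrite subr_eq0 => /eqP <-.
  rewrite rmorph_sum mulr_sumr. apply: eq_bigr => k _.
  rewrite !mxE. have := W24E k s; rewrite /W24 !mxE => ->. by rewrite rmorphM /= mulrA.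
Qed.


Lemma frame_of_t (R : rcfType) (t : nat -> int) (k : nat) :
  (3 %| t 0%N)%Z -> (3 %| t 2%N - t 1%N)%Z ->
  (3 %| t 3%N)%Z -> (3 %| t 4%N)%Z -> (3 %| t 5%N)%Z ->
  \sum_(p < 6) wt p * t p ^+ 2 = (3 * k)%N%:Z ->
  has_frame (@A3 R _ C3W) k.
Proof.
move=> H0 H21 H3 H4 H5 Hsum.
set s := (Num.sqrt (3:R))^-1.
pose cv (i : 'I_(24+24)) := \row_(l < 24+24) ((vf t i l)%:~R : 'Z_3).
pose wv (i : 'I_(24+24)) := \row_(l < 24+24) (((vf t i l - rho3 (cv i ord0 l)) %/ 3)%Z).
have Ev : forall i l, (map_mx rho3 (cv i) + 3 *: wv i) 0 l = vf t i l.
{ move=> i l. rewrite !mxE. rewrite [3 * _]mulrC divzK ?rho3_dvd //.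
  by rewrite addrC subrK. }
exists (fun i : 'I_(24+24) => s *: map_mx intr (map_mx rho3 (cv i) + 3 *: wv i)).
split.
- move=> i. exists (cv i). split; first exact: code_vec (ltn_ord i) H0 H21 H3 H4 H5.
  by exists (wv i).
- move=> i j. rewrite /dotR.
  have Ef : forall i l, (s *: map_mx intr (map_mx rho3 (cv i) + 3 *: wv i)) 0 l = s * (vf t i l)%:~R.
  { move=> i' l. by rewrite 2!mxE Ev. }
  under eq_bigr => l _ do rewrite !Ef mulrACA -intrM.
  rewrite -mulr_sumr -rmorph_sum /=.
  rewrite (gram t i j (ltn_ord i) (ltn_ord j)) Hsum.
  have -> : ((i : nat) == j) = (i == j) by []. case: (i == j) => /=; last by have -> : (0:int)%:~R = 0 :> R by []; rewrite mulr0.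
  have s2 : s * s = 3%:R^-1.
  { by rewrite /s -invfM -expr2 sqr_sqrtr // ler0n. }
  rewrite s2 -pmulrn natrM mulKf //. by rewrite pnatr_eq0.
Qed.

Definition tl (x y z0 z1 z2 z3 : int) (p : nat) : int := nth 0 [:: x; y; z0; z1; z2; z3] p.

Lemma sum_tl x y z0 z1 z2 z3 :
  \sum_(p < 6) wt p * tl x y z0 z1 z2 z3 p ^+ 2 = x * x + 23 * (y * y) + z0 * z0 + z1 * z1 + z2 * z2 + z3 * z3.
Proof. rewrite !big_ord_recl big_ord0 /= /bump /= /wt /tl /= !expr2. lia. Qed.

Lemma dvd3m (a : int) : (3 %| 3 * a)%Z.
Proof. by apply/dvdzP; exists a; rewrite mulrC. Qed.

Lemma params k : (3 <= k)%N -> k <> 4%N -> k <> 5%N -> k <> 7%N -> k <> 10%N ->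
  exists t : nat -> int, (3 %| t 0%N)%Z /\ (3 %| t 2%N - t 1%N)%Z /\ (3 %| t 3%N)%Z /\
    (3 %| t 4%N)%Z /\ (3 %| t 5%N)%Z /\ \sum_(p < 6) wt p * t p ^+ 2 = (3 * k)%N%:Z.
Proof.
move=> H3 H4 H5 H7 H10.
have Hk := divn_eq k 3. have Hr : (k %% 3 < 3)%N by rewrite ltn_mod.
set n := (k %/ 3)%N in Hk. set r := (k %% 3)%N in Hk Hr.
case: r Hk Hr => [|[|[|r]]] Hk Hr //.
- have [a [b [c [d Hn]]]] := fsq_nat n.
  exists (tl 0 0 (3 * a%:Z) (3 * b%:Z) (3 * c%:Z) (3 * d%:Z)).
  rewrite sum_tl /tl /=. do !split; rewrite ?subr0 ?dvdz0 ?dvd3m //. lia.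
- have [a [b [c [d Hn]]]] := fsq_nat (n - 4)%N.
  exists (tl (3 * a%:Z) 1 4 (3 * b%:Z) (3 * c%:Z) (3 * d%:Z)).
  rewrite sum_tl /tl /=. do !split; rewrite ?dvd3m //. lia.
- have [a [b [c [d Hn]]]] := fsq_nat (n - 2)%N.
  exists (tl (3 * a%:Z) 1 1 (3 * b%:Z) (3 * c%:Z) (3 * d%:Z)).
  rewrite sum_tl /tl /=. do !split; rewrite ?subrr ?dvdz0 ?dvd3m //. lia.
Qed.

Theorem lemma5p1 (R : rcfType) (k : nat) :
  (3 <= k)%N ->
  ~ (exists m1 m2 m3 m4 : nat, k = (2 ^ m1 * 5 ^ m2 * 7 ^ m3 * 23 ^ m4)%N) ->
  has_frame (@A3 R _ C3W) k.
Proof.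
move=> H3 Hn.
have [t [H0 [H21 [Ht3 [Ht4 [Ht5 Hs]]]]]] : exists t : nat -> int, (3 %| t 0%N)%Z /\ (3 %| t 2%N - t 1%N)%Z /\ (3 %| t 3%N)%Z /\
    (3 %| t 4%N)%Z /\ (3 %| t 5%N)%Z /\ \sum_(p < 6) wt p * t p ^+ 2 = (3 * k)%N%:Z.
{ apply: params => // E; apply: Hn; rewrite E.
  - by exists 2%N, 0%N, 0%N, 0%N.
  - by exists 0%N, 1%N, 0%N, 0%N.
  - by exists 0%N, 0%N, 1%N, 0%N.
  - by exists 1%N, 1%N, 0%N, 0%N. }
exact: frame_of_t H0 H21 Ht3 Ht4 Ht5 Hs.
Qed.
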